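(* For generic $x_0,x_1,\dots,x_L$, the six-vertex partition function with domain-wall boundaries satisfies, for every $0\le l\le L$, \[ \sum_{i=0}^L\sigma_i^{(l)}\,Z(X_i^0)=0, \] where $X_0^0:=X$ and \[ \sigma_i^{(l)}=\begin{cases}\dfrac{c(x_0-x_l)}{b(x_0-x_l)}\displaystyle\prod_{k=1}^La(x_0-\mu_k)\prod_{\substack{k=1\\k\ne l}}^L\frac{a(x_k-x_0)}{b(x_k-x_0)} & i=0,\ l\ne0,\\[2ex] \displaystyle\prod_{k=1}^Lb(x_l-\mu_k)-\prod_{k=1}^La(x_l-\mu_k)\prod_{\substack{k=0\\k\ne l}}^L\frac{a(x_k-x_l)}{b(x_k-x_l)} & i=l,\\[2ex] \dfrac{c(x_i-x_l)}{b(x_i-x_l)}\displaystyle\prod_{k=1}^La(x_i-\mu_k)\prod_{\substack{k=0\\k\ne i,l}}^L\frac{a(x_k-x_i)}{b(x_k-x_i)} & \text{otherwise.}\end{cases} \]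
   Context: Six-vertex setup. Fix $\gamma\in\mathbb C$, $L\ge1$ and $\mu_1,\dots,\mu_L\in\mathbb C$. Let $a(x)=\sinh(x+\gamma)$, $b(x)=\sinh x$, $c(x)=\sinh\gamma$ (constant). With $v_1,v_2$ the standard basis of $\mathbb C^2$, let $R(x)$ be the matrix on $\mathbb C^2\otimes\mathbb C^2$ which in the ordered basis $v_1\otimes v_1,v_1\otimes v_2,v_2\otimes v_1,v_2\otimes v_2$ is $\begin{pmatrix}a(x)&0&0&0\\0&b(x)&c(x)&0\\0&c(x)&b(x)&0\\0&0&0&a(x)\end{pmatrix}$. On $\mathbb C^2_0\otimes(\mathbb C^2)^{\otimes L}$, let $T_0(x)=R_{01}(x-\mu_1)R_{02}(x-\mu_2)\cdots R_{0L}(x-\mu_L)$ (with $R_{0i}$ acting on the auxiliary factor $0$ and quantum factor $i$), written in the auxiliary space as $\begin{pmatrix}A(x)&B(x)\\C(x)&D(x)\end{pmatrix}$. With $|0\rangle=v_1^{\otimes L}$ and $\langle\bar0|=(v_2^* )^{\otimes L}$, the partition function of the six-vertex model with domain-wall boundaries is $Z(x_1,\dots,x_L)=\langle\bar0|B(x_1)B(x_2)\cdots B(x_L)|0\rangle$. Notation: $X=(x_1,\dots,x_L)$; for $1\le i\le L$, $X_i^0$ is $X$ with $x_i$ replaced by $x_0$. *)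

(* Defs.v *)
From Stdlib Require Import Reals List Bool.
Open Scope R_scope.

Record Cplx := mkC { re : R; im : R }.

Definition C0 : Cplx := mkC 0 0.
Definition C1 : Cplx := mkC 1 0.
Definition Cadd (z w : Cplx) : Cplx := mkC (re z + re w) (im z + im w).
Definition Copp (z : Cplx) : Cplx := mkC (- re z) (- im z).
Definition Csub (z w : Cplx) : Cplx := Cadd z (Copp w).
Definition Cmul (z w : Cplx) : Cplx :=
  mkC (re z * re w - im z * im w) (re z * im w + im z * re w).
(* multiplicative inverse; the value at 0 is irrelevant (never used below
   under the hypotheses of the theorem) *)
Definition Cinv (z : Cplx) : Cplx :=
  let n := re z * re z + im z * im z in mkC (re z / n) (- im z / n).
Definition Cdiv (z w : Cplx) : Cplx := Cmul z (Cinv w).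

Definition Cexp (z : Cplx) : Cplx :=
  mkC (exp (re z) * cos (im z)) (exp (re z) * sin (im z)).
Definition Csinh (z : Cplx) : Cplx :=
  Cmul (mkC (/2) 0) (Csub (Cexp z) (Cexp (Copp z))).

Fixpoint Csum (n : nat) (f : nat -> Cplx) : Cplx :=
  match n with O => C0 | S m => Cadd (Csum m f) (f m) end.
Fixpoint Cprod (n : nat) (f : nat -> Cplx) : Cplx :=
  match n with O => C1 | S m => Cmul (Cprod m f) (f m) end.
(* product over k = m, m+1, ..., n *)
Definition Cprod_range (m n : nat) (f : nat -> Cplx) : Cplx :=
  Cprod (S n - m) (fun j => f (m + j)%nat).

Definition wa (g x : Cplx) : Cplx := Csinh (Cadd x g).
Definition wb (x : Cplx) : Cplx := Csinh x.
Definition wc (g : Cplx) : Cplx := Csinh g.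

(* Matrix entry of R(x) in row v_al (x) v_ga, column v_be (x) v_de
   (first factor auxiliary, second quantum); false = v_1, true = v_2. *)
Definition Rent (g x : Cplx) (al ga be de : bool) : Cplx :=
  match al, ga, be, de with
  | false, false, false, false => wa g x
  | false, true,  false, true  => wb x
  | false, true,  true,  false => wc g
  | true,  false, false, true  => wc g
  | true,  false, true,  false => wb x
  | true,  true,  true,  true  => wa g x
  | _, _, _, _ => C0
  end.

(* Vectors of (C^2)^{(x)L}: coordinates on the basis v_{s_1} (x) ... (x) v_{s_L},
   indexed by s : list bool (only lists of length L are relevant).
   Vectors of C^2_0 (x) (C^2)^{(x)L}: functions bool -> St. *)
Definition St := list bool -> Cplx.
Definition AuxSt := bool -> St.

Fixpoint upd (s : list bool) (p : nat) (d : bool) : list bool :=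
  match s, p with
  | nil, _ => nil
  | _ :: t, O => d :: t
  | h :: t, S q => h :: upd t q d
  end.

Definition bsum (f : bool -> Cplx) : Cplx := Cadd (f false) (f true).

(* R_{0i}(x) acting on auxiliary factor 0 and quantum factor i (1-based) *)
Definition R0i (g : Cplx) (i : nat) (x : Cplx) (psi : AuxSt) : AuxSt :=
  fun al s => bsum (fun be => bsum (fun de =>
    Cmul (Rent g x al (nth (i - 1) s false) be de) (psi be (upd s (i - 1) de)))).

Fixpoint Tfrom (g : Cplx) (mu : nat -> Cplx) (x : Cplx) (k n : nat) (psi : AuxSt)
  : AuxSt :=
  match n with
  | O => psi
  | S n' => R0i g k (Csub x (mu k)) (Tfrom g mu x (S k) n' psi)
  end.

(* monodromy T_0(x) = R_{01}(x-mu_1) ... R_{0L}(x-mu_L) *)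
Definition T0 (L : nat) (g : Cplx) (mu : nat -> Cplx) (x : Cplx) : AuxSt -> AuxSt :=
  Tfrom g mu x 1 L.

(* B(x) = <v_1|_0 T_0(x) |v_2>_0 *)
Definition Bop (L : nat) (g : Cplx) (mu : nat -> Cplx) (x : Cplx) (phi : St) : St :=
  T0 L g mu x (fun be => if be then phi else (fun _ => C0)) false.

Fixpoint Bchain (L : nat) (g : Cplx) (mu y : nat -> Cplx) (k n : nat) (phi : St)
  : St :=
  match n with
  | O => phi
  | S n' => Bop L g mu (y k) (Bchain L g mu y (S k) n' phi)
  end.

Definition vac (L : nat) : St :=
  fun s => if list_eq_dec bool_dec s (repeat false L) then C1 else C0.

(* Z(x_1,...,x_L) = <0bar| B(x_1) ... B(x_L) |0>, <0bar| = (v_2^* )^{(x)L};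
   the spectral parameters are y 1, ..., y L. *)
Definition Zdw (L : nat) (g : Cplx) (mu y : nat -> Cplx) : Cplx :=
  Bchain L g mu y 1 L (vac L) (repeat true L).

(* X_i^0 : x_i replaced by x_0 (for i = 0 this is X itself) *)
Definition Xrep (x : nat -> Cplx) (i : nat) : nat -> Cplx :=
  fun k => if Nat.eqb k i then x O else x k.

Definition ab (g : Cplx) (x : nat -> Cplx) (k j : nat) : Cplx :=
  Cdiv (wa g (Csub (x k) (x j))) (wb (Csub (x k) (x j))).

Definition sigma_coef (L : nat) (g : Cplx) (mu x : nat -> Cplx) (l i : nat) : Cplx :=
  if Nat.eqb i l then
    Csub (Cprod_range 1 L (fun k => wb (Csub (x l) (mu k))))
         (Cmul (Cprod_range 1 L (fun k => wa g (Csub (x l) (mu k))))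
               (Cprod_range 0 L (fun k => if Nat.eqb k l then C1 else ab g x k l)))
  else if Nat.eqb i 0 then
    Cmul (Cdiv (wc g) (wb (Csub (x O) (x l))))
      (Cmul (Cprod_range 1 L (fun k => wa g (Csub (x O) (mu k))))
            (Cprod_range 1 L (fun k => if Nat.eqb k l then C1 else ab g x k O)))
  else
    Cmul (Cdiv (wc g) (wb (Csub (x i) (x l))))
      (Cmul (Cprod_range 1 L (fun k => wa g (Csub (x i) (mu k))))
            (Cprod_range 0 L (fun k =>
               if Nat.eqb k i || Nat.eqb k l then C1 else ab g x k i))).

(* Main.v *)
From Stdlib Require Import Reals List Bool Lra Lia Psatz Ring Field Permutation FinFun.
From Stdlib Require Import FunctionalExtensionality.
Require Import Defs.
Open Scope R_scope.

Lemma Ceq (a b c d : R) : a = c -> b = d -> mkC a b = mkC c d.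
Proof. intros; subst; reflexivity. Qed.

Lemma Cring : ring_theory C0 Defs.C1 Cadd Cmul Csub Copp (@eq Cplx).
Proof.
  constructor; intros; repeat match goal with z : Cplx |- _ => destruct z end;
  unfold Cadd, Cmul, Csub, Copp, C0, Defs.C1; simpl; try reflexivity; apply Ceq; ring.
Qed.

Lemma one_neq_zero : Defs.C1 <> C0.
Proof. unfold Defs.C1, C0; intro H; injection H; lra. Qed.

Lemma Cnorm_pos (z : Cplx) : z <> C0 -> re z * re z + im z * im z <> 0.
Proof.
  destruct z as [a b]; simpl; intros H E. apply H.
  assert (a = 0) by nra. assert (b = 0) by nra. subst; reflexivity.
Qed.

Lemma Cfield : field_theory C0 Defs.C1 Cadd Cmul Csub Copp Cdiv Cinv (@eq Cplx).
Proof.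
  constructor.
  - exact Cring.
  - exact one_neq_zero.
  - reflexivity.
  - intros p Hp. pose proof (Cnorm_pos p Hp) as Hn. destruct p as [a b]; simpl in *.
    unfold Cmul, Cinv, Defs.C1; simpl. apply Ceq; field; auto.
Qed.

Add Field Cfield_inst : Cfield.



Lemma Cexp_add z w : Cexp (Cadd z w) = Cmul (Cexp z) (Cexp w).
Proof.
  destruct z as [a b], w as [c d]; unfold Cexp, Cadd, Cmul; simpl.
  rewrite exp_plus, cos_plus, sin_plus. apply Ceq; ring.
Qed.

Lemma Cexp_neq0 z : Cexp z <> C0.
Proof.
  destruct z as [a b]; unfold Cexp, C0; simpl; intro H; injection H; intros H1 H2.
  pose proof (exp_pos a). pose proof (sin2_cos2 b). unfold Rsqr in *.
  assert (cos b = 0) by (apply Rmult_integral in H2; destruct H2; [lra|auto]).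
  assert (sin b = 0) by (apply Rmult_integral in H1; destruct H1; [lra|auto]).
  nra.
Qed.

Lemma Cexp_opp z : Cexp (Copp z) = Cinv (Cexp z).
Proof.
  assert (H: Cmul (Cexp z) (Cexp (Copp z)) = Defs.C1).
  { rewrite <- Cexp_add. destruct z as [re0 im0]; unfold Cadd, Copp, Cexp; simpl.
    replace (re0 + - re0) with 0 by ring. replace (im0 + - im0) with 0 by ring.
    rewrite exp_0, cos_0, sin_0. unfold Defs.C1; apply Ceq; ring. }
  pose proof (Cexp_neq0 z).
  transitivity (Cmul (Cinv (Cexp z)) (Cmul (Cexp z) (Cexp (Copp z)))).
  - field; auto.
  - rewrite H; field; auto.
Qed.

Definition sh (E : Cplx) : Cplx := Cmul (mkC (/2) 0) (Csub E (Cinv E)).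

Lemma Csinh_sh z : Csinh z = sh (Cexp z).
Proof. unfold Csinh, sh. rewrite Cexp_opp. reflexivity. Qed.

Lemma wa_sh g u : wa g u = sh (Cmul (Cexp u) (Cexp g)).
Proof. unfold wa. rewrite Csinh_sh, Cexp_add. reflexivity. Qed.
Lemma wb_sh u : wb u = sh (Cexp u).
Proof. unfold wb. apply Csinh_sh. Qed.
Lemma wc_sh g : wc g = sh (Cexp g).
Proof. unfold wc. apply Csinh_sh. Qed.

Lemma Cexp_sub x y m : Cexp (Csub x y) = Cdiv (Cexp (Csub x m)) (Cexp (Csub y m)).
Proof.
  replace (Csub x y) with (Cadd (Csub x m) (Copp (Csub y m))) by ring.
  rewrite Cexp_add, Cexp_opp. reflexivity.
Qed.

Lemma ybe_local g x y m i j h r r' d' :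
  bsum (fun p => bsum (fun q => bsum (fun de =>
     Cmul (Rent g (Csub x y) i j p q)
       (Cmul (Rent g (Csub x m) p h r de) (Rent g (Csub y m) q de r' d')))))
  = bsum (fun p => bsum (fun q => bsum (fun de =>
     Cmul (Rent g (Csub y m) j h q de)
       (Cmul (Rent g (Csub x m) i de p d') (Rent g (Csub x y) p q r r'))))).
Proof.
  assert (HX := Cexp_neq0 (Csub x m)). assert (HY := Cexp_neq0 (Csub y m)).
  assert (HG := Cexp_neq0 g).
  unfold bsum. destruct i, j, h, r, r', d'; simpl;
  rewrite ?wa_sh, ?wb_sh, ?wc_sh, ?(Cexp_sub x y m); unfold sh;
  generalize (Cexp (Csub x m)) (Cexp (Csub y m)) (Cexp g) HX HY HG;
  intros X Y G HX' HY' HG'; field; auto.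
Qed.

Definition shift (mu : nat -> Cplx) : nat -> Cplx := fun j => mu (S j).
Definition rst (v : St) (de : bool) : St := fun u => v (de :: u).
Arguments rst : simpl never.

Fixpoint Mon (g : Cplx) (n : nat) (mu : nat -> Cplx) (x : Cplx) (i k : bool)
  (v : St) (s : list bool) {struct n} : Cplx :=
  match n, s with
  | O, _ => if Bool.eqb i k then v s else C0
  | S _, nil => if Bool.eqb i k then v nil else C0
  | S n', h :: t => bsum (fun r => bsum (fun de =>
       Cmul (Rent g (Csub x (mu 1%nat)) i h r de)
            (Mon g n' (shift mu) x r k (rst v de) t)))
  end.

Definition Vadd (v w : St) : St := fun s => Cadd (v s) (w s).
Definition Vsc (c : Cplx) (v : St) : St := fun s => Cmul c (v s).
Definition Vz : St := fun _ => C0.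

Lemma rst_Vadd v w de : rst (Vadd v w) de = Vadd (rst v de) (rst w de).
Proof. reflexivity. Qed.
Lemma rst_Vsc c v de : rst (Vsc c v) de = Vsc c (rst v de).
Proof. reflexivity. Qed.
Lemma rst_Vz de : rst Vz de = Vz.
Proof. reflexivity. Qed.

Lemma Mon_Vadd g n mu x i k v w s :
  Mon g n mu x i k (Vadd v w) s = Cadd (Mon g n mu x i k v s) (Mon g n mu x i k w s).
Proof.
  revert mu i v w s; induction n; intros mu i v w s.
  - simpl. destruct (Bool.eqb i k); unfold Vadd; ring.
  - destruct s as [|h t]; simpl.
    + destruct (Bool.eqb i k); unfold Vadd; ring.
    + unfold bsum. rewrite !rst_Vadd, !IHn. ring.
Qed.

Lemma Mon_Vsc g n mu x i k c v s :
  Mon g n mu x i k (Vsc c v) s = Cmul c (Mon g n mu x i k v s).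
Proof.
  revert mu i v s; induction n; intros mu i v s.
  - simpl. destruct (Bool.eqb i k); unfold Vsc; ring.
  - destruct s as [|h t]; simpl.
    + destruct (Bool.eqb i k); unfold Vsc; ring.
    + unfold bsum. rewrite !rst_Vsc, !IHn. ring.
Qed.

Lemma Mon_Vz g n mu x i k s : Mon g n mu x i k Vz s = C0.
Proof.
  revert mu i s; induction n; intros mu i s.
  - simpl. destruct (Bool.eqb i k); reflexivity.
  - destruct s as [|h t]; simpl.
    + destruct (Bool.eqb i k); reflexivity.
    + unfold bsum. rewrite !rst_Vz, !IHn. ring.
Qed.

Lemma Mon_ext g n mu x i k v w s : (forall u, v u = w u) ->
  Mon g n mu x i k v s = Mon g n mu x i k w s.
Proof. intros H. replace v with w; auto. apply functional_extensionality; auto. Qed.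

Lemma Mon_bsum g n mu x i k (F : bool -> St) s :
  Mon g n mu x i k (fun u => bsum (fun b => F b u)) s
  = bsum (fun b => Mon g n mu x i k (F b) s).
Proof.
  unfold bsum. rewrite <- Mon_Vadd. apply Mon_ext. reflexivity.
Qed.

Lemma Mon_cmul g n mu x i k c (F : St) s :
  Mon g n mu x i k (fun u => Cmul c (F u)) s = Cmul c (Mon g n mu x i k F s).
Proof. rewrite <- Mon_Vsc. reflexivity. Qed.

Lemma bsum_ext (f f' : bool -> Cplx) : (forall b, f b = f' b) -> bsum f = bsum f'.
Proof. intros H; unfold bsum; rewrite !H; reflexivity. Qed.

Lemma Mon_comp_cons g n mu x y p k q l v h t :
  Mon g (S n) mu x p k (Mon g (S n) mu y q l v) (h :: t) =
  bsum (fun r => bsum (fun de => Cmul (Rent g (Csub x (mu 1%nat)) p h r de)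
    (bsum (fun r' => bsum (fun de' => Cmul (Rent g (Csub y (mu 1%nat)) q de r' de')
       (Mon g n (shift mu) x r k (Mon g n (shift mu) y r' l (rst v de')) t)))))).
Proof.
  simpl. apply bsum_ext; intro r. apply bsum_ext; intro de. f_equal.
  transitivity (Mon g n (shift mu) x r k (fun u => bsum (fun r' => bsum (fun de' =>
     Cmul (Rent g (Csub y (mu 1%nat)) q de r' de') (Mon g n (shift mu) y r' l (rst v de') u)))) t).
  - apply Mon_ext. intro u. reflexivity.
  - rewrite Mon_bsum. apply bsum_ext; intro r'.
    rewrite Mon_bsum. apply bsum_ext; intro de'. apply Mon_cmul.
Qed.

Lemma rtt_step (Rxy Rx Ry : bool -> bool -> bool -> bool -> Cplx)
  (T1 : bool -> bool -> bool -> Cplx) (T2 : bool -> bool -> bool -> bool -> bool -> Cplx)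
  (i j h k l : bool) :
  (forall r r' d,
     bsum (fun p => bsum (fun q => bsum (fun de =>
        Cmul (Rxy i j p q) (Cmul (Rx p h r de) (Ry q de r' d)))))
   = bsum (fun p => bsum (fun q => bsum (fun de =>
        Cmul (Ry j h q de) (Cmul (Rx i de p d) (Rxy p q r r')))))) ->
  (forall p q d,
     bsum (fun r => bsum (fun r' => Cmul (Rxy p q r r') (T1 r r' d)))
   = bsum (fun r => bsum (fun r' => Cmul (Rxy r r' k l) (T2 q p r r' d)))) ->
  bsum (fun p => bsum (fun q => Cmul (Rxy i j p q)
    (bsum (fun r => bsum (fun de => Cmul (Rx p h r de)
      (bsum (fun r' => bsum (fun d => Cmul (Ry q de r' d) (T1 r r' d))))))))) =
  bsum (fun p => bsum (fun q => Cmul (Rxy p q k l)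
    (bsum (fun r' => bsum (fun de => Cmul (Ry j h r' de)
      (bsum (fun r => bsum (fun d => Cmul (Rx i de r d) (T2 r' r p q d))))))))).
Proof.
  intros HY HI.
  transitivity (bsum (fun d => bsum (fun r => bsum (fun r' => Cmul (T1 r r' d)
     (bsum (fun p => bsum (fun q => bsum (fun de =>
        Cmul (Rxy i j p q) (Cmul (Rx p h r de) (Ry q de r' d)))))))))).
  { unfold bsum; ring. }
  transitivity (bsum (fun d => bsum (fun r => bsum (fun r' => Cmul (T1 r r' d)
     (bsum (fun p => bsum (fun q => bsum (fun de =>
        Cmul (Ry j h q de) (Cmul (Rx i de p d) (Rxy p q r r')))))))))).
  { apply bsum_ext; intro d; apply bsum_ext; intro r; apply bsum_ext; intro r'.
    rewrite HY; reflexivity. }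
  transitivity (bsum (fun d => bsum (fun p => bsum (fun q => bsum (fun de =>
     Cmul (Cmul (Ry j h q de) (Rx i de p d))
       (bsum (fun r => bsum (fun r' => Cmul (Rxy p q r r') (T1 r r' d))))))))).
  { unfold bsum; ring. }
  transitivity (bsum (fun d => bsum (fun p => bsum (fun q => bsum (fun de =>
     Cmul (Cmul (Ry j h q de) (Rx i de p d))
       (bsum (fun r => bsum (fun r' => Cmul (Rxy r r' k l) (T2 q p r r' d))))))))).
  { apply bsum_ext; intro d; apply bsum_ext; intro p; apply bsum_ext; intro q;
    apply bsum_ext; intro de. rewrite HI; reflexivity. }
  unfold bsum; ring.
Qed.

Lemma bsum2_ext (F G : bool -> bool -> Cplx) : (forall p q, F p q = G p q) ->
  bsum (fun p => bsum (fun q => F p q)) = bsum (fun p => bsum (fun q => G p q)).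
Proof. intros H; unfold bsum; rewrite !H; reflexivity. Qed.

Lemma RTT g n mu x y v s i j k l :
  bsum (fun p => bsum (fun q => Cmul (Rent g (Csub x y) i j p q)
     (Mon g n mu x p k (Mon g n mu y q l v) s)))
  = bsum (fun p => bsum (fun q => Cmul (Rent g (Csub x y) p q k l)
     (Mon g n mu y j q (Mon g n mu x i p v) s))).
Proof.
  revert mu v s i j k l; induction n; intros mu v s i j k l.
  - unfold bsum; destruct i, j, k, l; simpl; ring.
  - destruct s as [|h t].
    + unfold bsum; destruct i, j, k, l; simpl; ring.
    + erewrite bsum2_ext; [| intros p q; rewrite Mon_comp_cons; reflexivity].
      symmetry.
      erewrite bsum2_ext; [| intros p q; rewrite Mon_comp_cons; reflexivity].
      symmetry.
      apply (rtt_step (Rent g (Csub x y)) (Rent g (Csub x (mu 1%nat))) (Rent g (Csub y (mu 1%nat)))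
        (fun r r' d => Mon g n (shift mu) x r k (Mon g n (shift mu) y r' l (rst v d)) t)
        (fun qq pp rr rr' d => Mon g n (shift mu) y qq rr' (Mon g n (shift mu) x pp rr (rst v d)) t)).
      * intros. apply ybe_local.
      * intros p q d. apply IHn.
Qed.

Definition ccont (f : R -> Cplx) : Prop :=
  continuity_pt (fun t => re (f t)) 0 /\ continuity_pt (fun t => im (f t)) 0.

Lemma ccont_const c : ccont (fun _ => c).
Proof. split; apply continuity_pt_const; intros a b; reflexivity. Qed.

Lemma ccont_add f h : ccont f -> ccont h -> ccont (fun t => Cadd (f t) (h t)).
Proof. intros [A B] [C D]; split; simpl; apply continuity_pt_plus; auto. Qed.

Lemma ccont_mul f h : ccont f -> ccont h -> ccont (fun t => Cmul (f t) (h t)).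
Proof.
  intros [A B] [C D]; split; simpl.
  - apply continuity_pt_minus; apply continuity_pt_mult; auto.
  - apply continuity_pt_plus; apply continuity_pt_mult; auto.
Qed.

Lemma ccont_sinh a b : ccont (fun t => Csinh (mkC (a + t) b)).
Proof. unfold Csinh, Cexp, Cmul, Csub, Cadd, Copp; split; simpl; reg. Qed.

Lemma ccont_ext f h : (forall t, f t = h t) -> ccont f -> ccont h.
Proof.
  intros E. replace h with f; auto. apply functional_extensionality; auto.
Qed.

Lemma ccont_zero f : ccont f -> (forall t, t <> 0 -> f t = C0) -> f 0 = C0.
Proof.
  intros [A B] H.
  assert (Z : forall (u : R -> R), continuity_pt u 0 -> (forall t, t <> 0 -> u t = 0) -> u 0 = 0).
  { intros u Hu Hz. destruct (Req_dec (u 0) 0) as [E|E]; auto.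
    destruct (Hu (Rabs (u 0))) as [al [Hal Hd]]. { apply Rabs_pos_lt; auto. }
    assert (Hx : u (al / 2) = 0) by (apply Hz; lra).
    specialize (Hd (al/2)). rewrite Hx in Hd. unfold R_dist in Hd.
    assert (HH : Rabs (0 - u 0) < Rabs (u 0)).
    { apply Hd. split. { unfold D_x, no_cond; split; auto; lra. }
      simpl; unfold R_dist; rewrite Rminus_0_r, Rabs_right; lra. }
    rewrite Rabs_minus_sym, Rminus_0_r in HH. lra. }
  destruct (f 0) as [p q] eqn:E.
  assert (p = 0).
  { change p with (re (mkC p q)). rewrite <- E. apply (Z (fun t => re (f t))); auto.
    intros t Ht. rewrite H; auto. }
  assert (q = 0).
  { change q with (im (mkC p q)). rewrite <- E. apply (Z (fun t => im (f t))); auto.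
    intros t Ht. rewrite H; auto. }
  subst; reflexivity.
Qed.

Definition xshift (x : Cplx) (t : R) : Cplx := Cadd x (mkC t 0).

Lemma ccont_wa g x m : ccont (fun t => wa g (Csub (xshift x t) m)).
Proof.
  apply (ccont_ext (fun t => Csinh (mkC ((re x - re m + re g) + t) (im x + 0 - im m + im g)))).
  - intro t. unfold wa, xshift. f_equal. destruct x as [x1 x2], m as [m1 m2], g as [g1 g2]; unfold Cadd, Csub, Copp; simpl.
    unfold Cadd; simpl; apply Ceq; ring.
  - apply ccont_sinh.
Qed.

Lemma ccont_wb x m : ccont (fun t => wb (Csub (xshift x t) m)).
Proof.
  apply (ccont_ext (fun t => Csinh (mkC ((re x - re m) + t) (im x + 0 - im m)))).
  - intro t. unfold wb, xshift. f_equal. destruct x as [x1 x2], m as [m1 m2]; unfold Cadd, Csub, Copp; simpl.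
    unfold Cadd; simpl; apply Ceq; ring.
  - apply ccont_sinh.
Qed.

Lemma ccont_Rent g (xt : R -> Cplx) m i h r de :
  ccont (fun t => wa g (Csub (xt t) m)) -> ccont (fun t => wb (Csub (xt t) m)) ->
  ccont (fun t => Rent g (Csub (xt t) m) i h r de).
Proof.
  intros Ha Hb. destruct i, h, r, de; simpl; auto; apply ccont_const.
Qed.

Lemma ccont_bsum (F : bool -> R -> Cplx) : (forall b, ccont (F b)) ->
  ccont (fun t => bsum (fun b => F b t)).
Proof. intros H. unfold bsum. apply ccont_add; auto. Qed.

Lemma ccont_Mon g n mu (xt : R -> Cplx) i k (v : R -> St) s :
  (forall m, ccont (fun t => wa g (Csub (xt t) m))) ->
  (forall m, ccont (fun t => wb (Csub (xt t) m))) ->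
  (forall s', ccont (fun t => v t s')) ->
  ccont (fun t => Mon g n mu (xt t) i k (v t) s).
Proof.
  intros Ha Hb. revert mu i v s; induction n; intros mu i v s Hv.
  - simpl. destruct (Bool.eqb i k); auto. apply ccont_const.
  - destruct s as [|h t']; simpl.
    + destruct (Bool.eqb i k); auto. apply ccont_const.
    + apply (ccont_bsum (fun r t => bsum (fun de => Cmul (Rent g (Csub (xt t) (mu 1%nat)) i h r de)
            (Mon g n (shift mu) (xt t) r k (rst (v t) de) t')))). intro r.
      apply (ccont_bsum (fun de t => Cmul (Rent g (Csub (xt t) (mu 1%nat)) i h r de)
            (Mon g n (shift mu) (xt t) r k (rst (v t) de) t'))). intro de.
      apply ccont_mul. { apply ccont_Rent; auto. }
      apply (IHn (shift mu) r (fun t => rst (v t) de)). intro s'. unfold rst. apply Hv.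
Qed.

Lemma ccont_sub f h : ccont f -> ccont h -> ccont (fun t => Csub (f t) (h t)).
Proof.
  intros [A B] [C D]; split; simpl; apply continuity_pt_plus; auto;
  apply continuity_pt_opp; auto.
Qed.

Lemma Cmul_cancel (a p q : Cplx) : a <> C0 -> Cmul a p = Cmul a q -> p = q.
Proof.
  intros Ha E. transitivity (Cmul (Cinv a) (Cmul a p)). { field; auto. }
  rewrite E. field; auto.
Qed.

Lemma Csub_eq0 (p q : Cplx) : Csub p q = C0 -> p = q.
Proof. intros E. transitivity (Cadd (Csub p q) q). { ring. } rewrite E; ring. Qed.

Lemma half_two : Cmul (mkC 2 0) (mkC (/2) 0) = Defs.C1.
Proof. unfold Cmul, Defs.C1; simpl; apply Ceq; field. Qed.

Lemma sh_zero w : w <> C0 -> sh w = C0 -> Cmul w w = Defs.C1.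
Proof.
  unfold sh; intros Hw H.
  assert (H2 : Csub w (Cinv w) = C0).
  { transitivity (Cmul (Cmul (mkC 2 0) (mkC (/2) 0)) (Csub w (Cinv w))).
    { rewrite half_two; ring. }
    transitivity (Cmul (mkC 2 0) (Cmul (mkC (/ 2) 0) (Csub w (Cinv w)))). { ring. }
    rewrite H; ring. }
  transitivity (Cadd (Cmul w (Csub w (Cinv w))) Defs.C1). { field; auto. }
  rewrite H2; ring.
Qed.

Lemma Cmul_neq0 a b : a <> C0 -> b <> C0 -> Cmul a b <> C0.
Proof.
  intros Ha Hb E. apply Hb. transitivity (Cmul (Cinv a) (Cmul a b)). { field; auto. }
  rewrite E; ring.
Qed.

Lemma xshift_0 x : xshift x 0 = x.
Proof. destruct x as [x1 x2]; unfold xshift, Cadd; simpl; apply Ceq; ring. Qed.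

Lemma wa_shift_nz g x y t : wa g (Csub x y) = C0 -> t <> 0 ->
  wa g (Csub (xshift x t) y) <> C0.
Proof.
  intros H Ht. rewrite wa_sh in *.
  replace (Csub (xshift x t) y) with (Cadd (Csub x y) (mkC t 0))
    by (unfold xshift; ring).
  rewrite Cexp_add.
  set (E := Cmul (Cexp (Csub x y)) (Cexp g)) in *.
  assert (HE : E <> C0) by (apply Cmul_neq0; apply Cexp_neq0).
  assert (He : Cexp (mkC t 0) = mkC (exp t) 0).
  { unfold Cexp; simpl. rewrite cos_0, sin_0. apply Ceq; ring. }
  rewrite He.
  replace (Cmul (Cmul (Cexp (Csub x y)) (mkC (exp t) 0)) (Cexp g))
    with (Cmul E (mkC (exp t) 0)) by (unfold E; ring).
  intro H'.
  assert (He0 : mkC (exp t) 0 <> C0).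
  { unfold C0; intro Q; injection Q; intros; pose proof (exp_pos t); lra. }
  apply sh_zero in H; auto. apply sh_zero in H'; [|apply Cmul_neq0; auto].
  assert (Q : Cmul (mkC (exp t) 0) (mkC (exp t) 0) = Defs.C1).
  { transitivity (Cmul (Cmul E E) (Cmul (mkC (exp t) 0) (mkC (exp t) 0))).
    { rewrite H; ring. }
    rewrite <- H'. ring. }
  unfold Cmul, Defs.C1 in Q; simpl in Q. injection Q; intros _ Q1.
  rewrite <- exp_plus in Q1. replace (exp (t + t) - 0 * 0) with (exp (t + t)) in Q1
    by ring.
  rewrite <- exp_0 in Q1. apply exp_inv in Q1. lra.
Qed.

Lemma BB_gen g n mu x y v s : wa g (Csub x y) <> C0 ->
  Mon g n mu x false true (Mon g n mu y false true v) s =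
  Mon g n mu y false true (Mon g n mu x false true v) s.
Proof.
  intros Ha. pose proof (RTT g n mu x y v s false false true true) as E.
  unfold bsum in E; simpl in E.
  apply (Cmul_cancel (wa g (Csub x y))); auto.
  transitivity (Cadd (Cadd (Cmul (wa g (Csub x y)) (Mon g n mu x false true (Mon g n mu y false true v) s))
     (Cmul C0 (Mon g n mu x false true (Mon g n mu y true true v) s)))
     (Cadd (Cmul C0 (Mon g n mu x true true (Mon g n mu y false true v) s))
       (Cmul C0 (Mon g n mu x true true (Mon g n mu y true true v) s)))).
  { ring. }
  rewrite E. ring.
Qed.

Lemma Cdec (a b : Cplx) : {a = b} + {a <> b}.
Proof.
  destruct a as [a1 a2], b as [b1 b2].
  destruct (Req_dec_T a1 b1); [destruct (Req_dec_T a2 b2)|].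
  - left; subst; reflexivity.
  - right; intro E; injection E; auto.
  - right; intro E; injection E; auto.
Qed.

Lemma BB g n mu x y v s :
  Mon g n mu x false true (Mon g n mu y false true v) s =
  Mon g n mu y false true (Mon g n mu x false true v) s.
Proof.
  destruct (Cdec (wa g (Csub x y)) C0) as [Ha|Ha]; [|apply BB_gen; auto].
  apply Csub_eq0.
  rewrite <- (xshift_0 x).
  apply (ccont_zero (fun t =>
     Csub (Mon g n mu (xshift x t) false true (Mon g n mu y false true v) s)
          (Mon g n mu y false true (Mon g n mu (xshift x t) false true v) s))).
  - apply ccont_sub.
    + apply (ccont_Mon g n mu (xshift x) false true (fun _ => Mon g n mu y false true v) s).
      * intro m; apply ccont_wa.
      * intro m; apply ccont_wb.
      * intros; apply ccont_const.
    + apply (ccont_Mon g n mu (fun _ => y) false true (fun t => Mon g n mu (xshift x t) false true v) s).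
      * intros; apply ccont_const.
      * intros; apply ccont_const.
      * intro s'. apply (ccont_Mon g n mu (xshift x) false true (fun _ => v) s').
        -- intro m; apply ccont_wa.
        -- intro m; apply ccont_wb.
        -- intros; apply ccont_const.
  - intros t Ht. rewrite BB_gen. { ring. } apply wa_shift_nz; auto.
Qed.

Lemma AB g n mu x y v s : wb (Csub y x) <> C0 ->
  Mon g n mu x false false (Mon g n mu y false true v) s =
  Csub (Cmul (Cdiv (wa g (Csub y x)) (wb (Csub y x)))
             (Mon g n mu y false true (Mon g n mu x false false v) s))
       (Cmul (Cdiv (wc g) (wb (Csub y x)))
             (Mon g n mu x false true (Mon g n mu y false false v) s)).
Proof.
  intros Hb. pose proof (RTT g n mu y x v s false false true false) as E.
  unfold bsum in E; simpl in E.
  apply (Cmul_cancel (wb (Csub y x))); auto.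
  transitivity (Csub (Cmul (wa g (Csub y x)) (Mon g n mu y false true (Mon g n mu x false false v) s))
     (Cmul (wc g) (Mon g n mu x false true (Mon g n mu y false false v) s))).
  2: { field; auto. }
  match type of E with ?L = ?R => assert (E2 : Csub R L = C0) by (rewrite E; ring) end.
  apply Csub_eq0. rewrite <- E2. ring.
Qed.

Fixpoint Lam (g : Cplx) (n : nat) (mu : nat -> Cplx) (z : Cplx) : Cplx :=
  match n with O => Defs.C1 | S n' => Cmul (wa g (Csub z (mu 1%nat))) (Lam g n' (shift mu) z) end.
Fixpoint Lbar (n : nat) (mu : nat -> Cplx) (z : Cplx) : Cplx :=
  match n with O => Defs.C1 | S n' => Cmul (wb (Csub z (mu 1%nat))) (Lbar n' (shift mu) z) end.

Lemma vac_nil0 : vac 0 nil = Defs.C1.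
Proof. reflexivity. Qed.
Lemma vac_0_cons h t : vac 0 (h :: t) = C0.
Proof. unfold vac. destruct (list_eq_dec bool_dec (h :: t) (repeat false 0)); [discriminate|reflexivity]. Qed.
Lemma vac_S_nil n : vac (S n) nil = C0.
Proof. unfold vac. destruct (list_eq_dec bool_dec nil (repeat false (S n))); [discriminate|reflexivity]. Qed.
Lemma vac_S_cons n h t : vac (S n) (h :: t) = if h then C0 else vac n t.
Proof.
  unfold vac. simpl.
  destruct (list_eq_dec bool_dec (h :: t) (false :: repeat false n)) as [E|E];
  destruct (list_eq_dec bool_dec t (repeat false n)) as [E'|E']; destruct h; try reflexivity;
  try (subst; contradiction); try (injection E; intros; subst; first [discriminate|contradiction]).
Qed.
Lemma rst_vac n de : rst (vac (S n)) de = if de then Vz else vac n.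
Proof.
  apply functional_extensionality; intro u. unfold rst. rewrite vac_S_cons.
  destruct de; reflexivity.
Qed.

Lemma Avac g n mu z i s :
  Mon g n mu z i false (vac n) s = if i then C0 else Cmul (Lam g n mu z) (vac n s).
Proof.
  revert mu i s; induction n; intros mu i s.
  - simpl. destruct i; simpl; ring.
  - destruct s as [|h t].
    + simpl. rewrite vac_S_nil. destruct i; simpl; ring.
    + simpl. unfold bsum. rewrite !rst_vac, !Mon_Vz, !IHn, vac_S_cons.
      destruct i, h; simpl; ring.
Qed.

Lemma Abar g n mu z i w :
  Mon g n mu z i false w (repeat true n) = if i then C0 else Cmul (Lbar n mu z) (w (repeat true n)).
Proof.
  revert mu i w; induction n; intros mu i w.
  - simpl. destruct i; simpl; ring.
  - simpl. unfold bsum. rewrite !IHn. unfold rst. destruct i; simpl; ring.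
Qed.

Lemma Mon_local g n mu x i k v w s :
  (forall u, length u = length s -> v u = w u) ->
  Mon g n mu x i k v s = Mon g n mu x i k w s.
Proof.
  revert mu i v w s; induction n; intros mu i v w s H.
  - simpl. rewrite H; auto.
  - destruct s as [|h t]; simpl.
    + rewrite H; auto.
    + apply bsum_ext; intro r; apply bsum_ext; intro de. f_equal.
      apply IHn. intros u Hu; unfold rst; apply H; simpl; auto.
Qed.

Lemma nth_mid (pre t : list bool) h : nth (length pre) (pre ++ h :: t) false = h.
Proof. induction pre; simpl; auto. Qed.
Lemma upd_mid (pre t : list bool) h de : upd (pre ++ h :: t) (length pre) de = pre ++ de :: t.
Proof. induction pre; simpl; auto. rewrite IHpre; auto. Qed.

Lemma Mon_mu_ext g n mu mu' x i k v s : (forall j, mu j = mu' j) ->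
  Mon g n mu x i k v s = Mon g n mu' x i k v s.
Proof. intros H. replace mu with mu'; auto. symmetry; apply functional_extensionality; auto. Qed.

Lemma Tfrom_Mon g mu x n : forall pre t psi al,
  length t = n ->
  Tfrom g mu x (S (length pre)) n psi al (pre ++ t) =
  bsum (fun be => Mon g n (fun j => mu (length pre + j)%nat) x al be (fun u => psi be (pre ++ u)) t).
Proof.
  induction n; intros pre t psi al Ht.
  - destruct t; [|discriminate]. simpl. unfold bsum. destruct al; simpl; ring.
  - destruct t as [|h t]; [discriminate|]. simpl in Ht. injection Ht; intro Ht'.
    simpl Tfrom. unfold R0i. replace (S (length pre) - 1)%nat with (length pre) by lia.
    rewrite nth_mid.
    transitivity (bsum (fun be => bsum (fun de => Cmul (Rent g (Csub x (mu (S (length pre)))) al h be de)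
       (bsum (fun be' => Mon g n (fun j => mu (S (length pre) + j)%nat) x be be'
          (fun u => psi be' ((pre ++ de :: nil) ++ u)) t))))).
    { apply bsum_ext; intro be; apply bsum_ext; intro de. f_equal.
      rewrite upd_mid. replace (pre ++ de :: t) with ((pre ++ de :: nil) ++ t)
        by (rewrite <- app_assoc; reflexivity).
      replace (S (S (length pre))) with (S (length (pre ++ de :: nil)))
        by (rewrite length_app; simpl; lia).
      rewrite IHn; auto. rewrite length_app; simpl.
      replace (length pre + 1)%nat with (S (length pre)) by lia. reflexivity. }
    simpl Mon.
    replace (mu (length pre + 1)%nat) with (mu (S (length pre))) by (f_equal; lia).
    assert (E : forall be r de, Mon g n (shift (fun j => mu (length pre + j)%nat)) x r be
       (rst (fun u => psi be (pre ++ u)) de) t =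
       Mon g n (fun j => mu (S (length pre) + j)%nat) x r be
          (fun u => psi be ((pre ++ de :: nil) ++ u)) t).
    { intros. rewrite (Mon_mu_ext _ _ _ (fun j => mu (S (length pre) + j)%nat)).
      - apply Mon_ext. intro u. unfold rst. rewrite <- app_assoc. reflexivity.
      - intro j. unfold shift. f_equal. lia. }
    unfold bsum. rewrite !E. change (fun j => mu (S (length pre + j))) with (fun j => mu (S (length pre) + j)%nat). ring.
Qed.

Lemma Bop_Mon L g mu x phi s : length s = L ->
  Bop L g mu x phi s = Mon g L mu x false true phi s.
Proof.
  intros Hs. unfold Bop, T0.
  pose proof (Tfrom_Mon g mu x L nil s (fun be => if be then phi else (fun _ => C0)) false Hs) as E.
  simpl in E. rewrite E. unfold bsum. simpl.
  change (fun j => mu j) with mu. change (fun u => phi u) with phi.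
  change (fun _ : list bool => C0) with Vz. rewrite Mon_Vz. ring.
Qed.

Definition Bl (g : Cplx) (n : nat) (mu : nat -> Cplx) (ys : list Cplx) (v : St) : St :=
  fold_right (fun y w => Mon g n mu y false true w) v ys.

Lemma Bchain_Bl L g mu y m : forall k phi s, length s = L ->
  Bchain L g mu y k m phi s = Bl g L mu (map y (seq k m)) phi s.
Proof.
  induction m; intros k phi s Hs.
  - reflexivity.
  - simpl. rewrite Bop_Mon; auto. apply Mon_local. intros u Hu. apply IHm. lia.
Qed.

Lemma Zdw_Bl L g mu y :
  Zdw L g mu y = Bl g L mu (map y (seq 1 L)) (vac L) (repeat true L).
Proof. unfold Zdw. apply Bchain_Bl. apply repeat_length. Qed.

Definition fr (g y z : Cplx) : Cplx := Cdiv (wa g (Csub y z)) (wb (Csub y z)).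
Definition hr (g y z : Cplx) : Cplx := Cdiv (wc g) (wb (Csub y z)).

Lemma wb_opp y w : wb (Csub w y) = Copp (wb (Csub y w)).
Proof.
  rewrite !wb_sh, (Cexp_sub w y C0), (Cexp_sub y w C0). unfold sh.
  assert (H1 := Cexp_neq0 (Csub w C0)). assert (H2 := Cexp_neq0 (Csub y C0)).
  generalize (Cexp (Csub w C0)) (Cexp (Csub y C0)) H1 H2. intros W Y HW HY. field; auto.
Qed.

Lemma poly3 g y w z :
  Cmul (wa g (Csub y w)) (wb (Csub y z)) =
  Cadd (Cmul (wa g (Csub y z)) (wb (Csub y w))) (Cmul (wc g) (wb (Csub w z))).
Proof.
  rewrite wc_sh, !wa_sh, !wb_sh, (Cexp_sub y w C0), (Cexp_sub y z C0), (Cexp_sub w z C0).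
  unfold sh.
  assert (H1 := Cexp_neq0 (Csub w C0)). assert (H2 := Cexp_neq0 (Csub y C0)).
  assert (H3 := Cexp_neq0 (Csub z C0)). assert (H4 := Cexp_neq0 g).
  generalize (Cexp (Csub w C0)) (Cexp (Csub y C0)) (Cexp (Csub z C0)) (Cexp g) H1 H2 H3 H4.
  intros W Y Z G HW HY HZ HG. field; auto.
Qed.

Lemma Copp_involutive_C (a : Cplx) : Copp (Copp a) = a.
Proof. ring. Qed.

Lemma coef3 g y w z :
  wb (Csub w z) <> C0 -> wb (Csub y w) <> C0 -> wb (Csub y z) <> C0 ->
  Cmul (hr g w z) (fr g y w) = Csub (Cmul (fr g y z) (hr g w z)) (Cmul (hr g y z) (hr g w y)).
Proof.
  intros H1 H2 H3. unfold fr, hr. rewrite (wb_opp y w).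
  replace (wa g (Csub y w)) with
    (Cdiv (Cadd (Cmul (wa g (Csub y z)) (wb (Csub y w))) (Cmul (wc g) (wb (Csub w z)))) (wb (Csub y z))).
  - field. repeat split; auto. intro Q. apply H2. rewrite <- (Copp_involutive_C (wb (Csub y w))). rewrite Q. ring.
  - rewrite <- poly3. field; auto.
Qed.

Fixpoint Lprod (l : list Cplx) (F : Cplx -> Cplx) : Cplx :=
  match l with nil => Defs.C1 | y :: t => Cmul (F y) (Lprod t F) end.
Fixpoint remove_at (i : nat) (l : list Cplx) : list Cplx :=
  match l, i with
  | nil, _ => nil
  | _ :: t, O => t
  | y :: t, S i' => y :: remove_at i' t
  end.
Fixpoint replace_at (l : list Cplx) (i : nat) (z : Cplx) : list Cplx :=
  match l, i with
  | nil, _ => nil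
  | _ :: t, O => z :: t
  | y :: t, S i' => y :: replace_at t i' z
  end.

Fixpoint Gd (l : list Cplx) : Prop :=
  match l with
  | nil => True
  | y :: t => (forall w, In w t -> wb (Csub y w) <> C0 /\ wb (Csub w y) <> C0) /\ Gd t
  end.

Lemma perm_replace (z y : Cplx) ys : forall i, (i < length ys)%nat ->
  Permutation (z :: replace_at ys i y) (y :: replace_at ys i z).
Proof.
  induction ys as [|a ys IH]; intros i Hi; simpl in Hi; [lia|].
  destruct i as [|i]; simpl.
  - apply perm_swap.
  - eapply perm_trans. { apply perm_swap. }
    eapply perm_trans. 2: { apply perm_swap. }
    apply perm_skip. apply IH. lia.
Qed.

Lemma Bl_perm g n mu ys ys' v : Permutation ys ys' -> Bl g n mu ys v = Bl g n mu ys' v.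
Proof.
  intros P; induction P; simpl; auto.
  - rewrite IHP; reflexivity.
  - apply functional_extensionality; intro s. apply BB.
  - rewrite IHP1; auto.
Qed.

Lemma Csum_first m (F : nat -> Cplx) : Csum (S m) F = Cadd (F O) (Csum m (fun i => F (S i))).
Proof.
  induction m; simpl in *. { ring. } rewrite IHm. ring.
Qed.

Lemma Csum_add m (F G : nat -> Cplx) : Csum m (fun i => Cadd (F i) (G i)) = Cadd (Csum m F) (Csum m G).
Proof. induction m; simpl. { ring. } rewrite IHm; ring. Qed.

Lemma Csum_scale m c (F : nat -> Cplx) : Csum m (fun i => Cmul c (F i)) = Cmul c (Csum m F).
Proof. induction m; simpl. { ring. } rewrite IHm; ring. Qed.

Lemma Csum_ext m (F G : nat -> Cplx) : (forall i, (i < m)%nat -> F i = G i) -> Csum m F = Csum m G.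
Proof. induction m; intros H; simpl; auto. rewrite IHm, H; auto. Qed.

Lemma Mon_Csum g n mu x i k m (F : nat -> St) s :
  Mon g n mu x i k (fun u => Csum m (fun j => F j u)) s = Csum m (fun j => Mon g n mu x i k (F j) s).
Proof.
  induction m; simpl.
  - apply (Mon_Vz g n mu x i k s).
  - rewrite <- IHm. rewrite <- Mon_Vadd. reflexivity.
Qed.

Definition C0c g n mu z ys := Cmul (Lam g n mu z) (Lprod ys (fun w => fr g w z)).
Definition Mc g n mu z ys i :=
  Copp (Cmul (hr g (nth i ys C0) z) (Cmul (Lam g n mu (nth i ys C0))
     (Lprod (remove_at i ys) (fun u => fr g u (nth i ys C0))))).

Lemma Mon_lin2 g n mu x i k c (W : St) m (M : nat -> Cplx) (V : nat -> St) s :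
  Mon g n mu x i k (fun u => Cadd (Cmul c (W u)) (Csum m (fun j => Cmul (M j) (V j u)))) s =
  Cadd (Cmul c (Mon g n mu x i k W s)) (Csum m (fun j => Cmul (M j) (Mon g n mu x i k (V j) s))).
Proof.
  rewrite (Mon_Vadd g n mu x i k (Vsc c W) (fun u => Csum m (fun j => Cmul (M j) (V j u)))).
  rewrite Mon_Vsc. f_equal.
  rewrite (Mon_Csum g n mu x i k m (fun j => Vsc (M j) (V j))).
  apply Csum_ext. intros j _. apply Mon_Vsc.
Qed.

Lemma Mc_step g n mu z y ys i : (i < length ys)%nat ->
  wb (Csub (nth i ys C0) z) <> C0 -> wb (Csub y (nth i ys C0)) <> C0 -> wb (Csub y z) <> C0 ->
  Mc g n mu z (y :: ys) (S i) =
  Csub (Cmul (fr g y z) (Mc g n mu z ys i)) (Cmul (hr g y z) (Mc g n mu y ys i)).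
Proof.
  intros Hi H1 H2 H3. unfold Mc. simpl.
  set (w := nth i ys C0) in *.
  set (P := Lprod (remove_at i ys) (fun u => fr g u w)).
  transitivity (Copp (Cmul (Cmul (hr g w z) (fr g y w)) (Cmul (Lam g n mu w) P))). { ring. }
  rewrite coef3; auto. ring.
Qed.

Lemma Aform g n mu ys : forall z, Gd (z :: ys) -> forall s,
  Mon g n mu z false false (Bl g n mu ys (vac n)) s =
  Cadd (Cmul (C0c g n mu z ys) (Bl g n mu ys (vac n) s))
       (Csum (length ys) (fun i => Cmul (Mc g n mu z ys i) (Bl g n mu (replace_at ys i z) (vac n) s))).
Proof.
  induction ys as [|y ys IH]; intros z Hg s.
  - simpl. rewrite Avac. unfold C0c. simpl. ring.
  - destruct Hg as [Hz Hg]. destruct Hg as [Hy Hg].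
    assert (Hzy : wb (Csub y z) <> C0) by (apply (Hz y); simpl; auto).
    assert (Gz : Gd (z :: ys)). { split; auto. intros w Hw. apply Hz. simpl; auto. }
    assert (Gy : Gd (y :: ys)). { split; auto. }
    change (Bl g n mu (y :: ys) (vac n)) with (Mon g n mu y false true (Bl g n mu ys (vac n))).
    rewrite AB; auto.
    set (W := Bl g n mu ys (vac n)).
    assert (E1 : Mon g n mu z false false W = fun u => Cadd (Cmul (C0c g n mu z ys) (W u))
       (Csum (length ys) (fun i => Cmul (Mc g n mu z ys i) (Bl g n mu (replace_at ys i z) (vac n) u)))).
    { apply functional_extensionality; intro u. apply IH; auto. }
    assert (E2 : Mon g n mu y false false W = fun u => Cadd (Cmul (C0c g n mu y ys) (W u))
       (Csum (length ys) (fun i => Cmul (Mc g n mu y ys i) (Bl g n mu (replace_at ys i y) (vac n) u)))).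
    { apply functional_extensionality; intro u. apply IH; auto. }
    rewrite E1, E2, !Mon_lin2.
    assert (E3 : Csum (length ys) (fun j => Cmul (Mc g n mu y ys j)
                   (Mon g n mu z false true (fun u => Bl g n mu (replace_at ys j y) (vac n) u) s)) =
                 Csum (length ys) (fun j => Cmul (Mc g n mu y ys j)
                   (Bl g n mu (y :: replace_at ys j z) (vac n) s))).
    { apply Csum_ext. intros j Hj. f_equal.
      change (Mon g n mu z false true (fun u => Bl g n mu (replace_at ys j y) (vac n) u))
        with (Bl g n mu (z :: replace_at ys j y) (vac n)).
      rewrite (Bl_perm g n mu _ _ _ (perm_replace z y ys j Hj)). reflexivity. }
    rewrite E3. simpl length. rewrite Csum_first. simpl replace_at.
    assert (E4 : Csum (length ys) (fun i => Cmul (Mc g n mu z (y :: ys) (S i))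
                    (Bl g n mu (y :: replace_at ys i z) (vac n) s)) =
                 Cadd (Cmul (fr g y z) (Csum (length ys) (fun i => Cmul (Mc g n mu z ys i)
                    (Bl g n mu (y :: replace_at ys i z) (vac n) s))))
                  (Cmul (Copp (hr g y z)) (Csum (length ys) (fun i => Cmul (Mc g n mu y ys i)
                    (Bl g n mu (y :: replace_at ys i z) (vac n) s))))).
    { rewrite <- !Csum_scale, <- Csum_add. apply Csum_ext. intros i Hi.
      assert (Hin : In (nth i ys C0) ys) by (apply nth_In; auto).
      rewrite Mc_step; auto.
      - ring.
      - apply (Hz (nth i ys C0)). simpl; auto.
      - apply (Hy (nth i ys C0)); auto. }
    rewrite E4.
    pose (S1 := Csum (length ys) (fun i => Cmul (Mc g n mu z ys i) (Bl g n mu (y :: replace_at ys i z) (vac n) s))).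
    pose (S2 := Csum (length ys) (fun i => Cmul (Mc g n mu y ys i) (Bl g n mu (y :: replace_at ys i z) (vac n) s))).
    pose (X := Bl g n mu (y :: ys) (vac n) s). pose (Y := Bl g n mu (z :: ys) (vac n) s).
    transitivity (Csub (Cmul (fr g y z) (Cadd (Cmul (C0c g n mu z ys) X) S1))
                       (Cmul (hr g y z) (Cadd (Cmul (C0c g n mu y ys) Y) S2))). { reflexivity. }
    transitivity (Cadd (Cmul (C0c g n mu z (y :: ys)) X) (Cadd (Cmul (Mc g n mu z (y :: ys) 0) Y)
       (Cadd (Cmul (fr g y z) S1) (Cmul (Copp (hr g y z)) S2)))). 2: { reflexivity. }
    assert (Emc0 : Mc g n mu z (y :: ys) 0 = Copp (Cmul (hr g y z) (C0c g n mu y ys))).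
    { unfold Mc, C0c. simpl. ring. }
    rewrite Emc0. unfold C0c. simpl. ring.
Qed.

Lemma Cprod_first m (F : nat -> Cplx) : Cprod (S m) F = Cmul (F O) (Cprod m (fun i => F (S i))).
Proof. induction m; simpl in *. { ring. } rewrite IHm. ring. Qed.

Lemma Cprod_ext m (F G : nat -> Cplx) : (forall i, (i < m)%nat -> F i = G i) -> Cprod m F = Cprod m G.
Proof. induction m; intros H; simpl; auto. rewrite IHm, H; auto. Qed.

Lemma Cprod_range_1 L F : Cprod_range 1 L F = Cprod L (fun j => F (S j)).
Proof. unfold Cprod_range. replace (S L - 1)%nat with L by lia. reflexivity. Qed.

Lemma Cprod_range_0 L F : Cprod_range 0 L F = Cprod (S L) F.
Proof. reflexivity. Qed.

Lemma Lprod_map x G a m : Lprod (map x (seq a m)) G = Cprod m (fun j => G (x (a + j)%nat)).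
Proof.
  revert a; induction m; intros a; [reflexivity|].
  simpl seq. simpl map. simpl Lprod. rewrite Cprod_first, IHm.
  rewrite Nat.add_0_r. f_equal. apply Cprod_ext. intros i _. do 2 f_equal. lia.
Qed.

Lemma Lprod_remove x G a m : forall i,
  Lprod (remove_at i (map x (seq a m))) G = Cprod m (fun j => if Nat.eqb j i then Defs.C1 else G (x (a + j)%nat)).
Proof.
  revert a; induction m; intros a i; [destruct i; reflexivity|].
  rewrite Cprod_first. simpl seq. simpl map.
  destruct i as [|i].
  - simpl remove_at. simpl Nat.eqb. rewrite Lprod_map.
    transitivity (Cprod m (fun j => G (x (S a + j)%nat))). { reflexivity. }
    rewrite (Cprod_ext m (fun i => G (x (a + S i)%nat))
                        (fun j => G (x (S a + j)%nat))). { ring. }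
    intros j _. do 2 f_equal. lia.
  - simpl remove_at. simpl Lprod. rewrite IHm. simpl Nat.eqb. rewrite Nat.add_0_r. f_equal.
    apply Cprod_ext. intros j _. simpl Nat.eqb. destruct (Nat.eqb j i); auto. do 2 f_equal. lia.
Qed.

Lemma Lam_Cprod g n mu z : Lam g n mu z = Cprod n (fun j => wa g (Csub z (mu (S j)))).
Proof.
  revert mu; induction n; intros mu; [reflexivity|].
  rewrite Cprod_first. simpl Lam. rewrite IHn. reflexivity.
Qed.

Lemma Lbar_Cprod n mu z : Lbar n mu z = Cprod n (fun j => wb (Csub z (mu (S j)))).
Proof.
  revert mu; induction n; intros mu; [reflexivity|].
  rewrite Cprod_first. simpl Lbar. rewrite IHn. reflexivity.
Qed.

Lemma replace_map x a m : forall i, (i < m)%nat ->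
  replace_at (map x (seq a m)) i (x O) = map (Xrep x (a + i)%nat) (seq a m).
Proof.
  revert a; induction m; intros a i Hi; [lia|].
  simpl seq. simpl map. destruct i as [|i].
  - simpl replace_at. rewrite Nat.add_0_r. unfold Xrep at 1. rewrite Nat.eqb_refl. f_equal.
    apply map_ext_in. intros k Hk. apply in_seq in Hk. unfold Xrep.
    destruct (Nat.eqb_spec k a); [lia|reflexivity].
  - simpl replace_at. rewrite IHm by lia. f_equal.
    + unfold Xrep. destruct (Nat.eqb_spec a (a + S i)); [lia|reflexivity].
    + f_equal. apply functional_extensionality; intro k. f_equal. lia.
Qed.

Lemma Gd_map (x : nat -> Cplx) (P : nat -> Prop) (l : list nat) :
  (forall j k, P j -> P k -> j <> k -> wb (Csub (x j) (x k)) <> C0) ->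
  NoDup l -> (forall k, In k l -> P k) -> Gd (map x l).
Proof.
  intros H. induction l as [|j l IH]; intros Hn Hp; simpl; auto.
  inversion Hn; subst. split.
  - intros w Hw. apply in_map_iff in Hw. destruct Hw as [k [Ek Hk]]. subst.
    assert (j <> k) by (intro; subst; contradiction).
    split; apply H; simpl in *; auto.
  - apply IH; auto. intros; apply Hp; simpl; auto.
Qed.

Lemma nth_map_seq x L i : (i < L)%nat -> nth i (map x (seq 1 L)) C0 = x (S i).
Proof.
  intros Hi. rewrite (nth_indep _ _ (x O)) by (rewrite length_map, length_seq; auto).
  rewrite map_nth, seq_nth; auto.
Qed.

Lemma Zdw_Xrep0 L g mu x : Zdw L g mu (Xrep x 0) = Zdw L g mu x.
Proof.
  rewrite !Zdw_Bl. replace (map (Xrep x 0) (seq 1 L)) with (map x (seq 1 L)); [reflexivity|].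
  apply map_ext_in. intros k Hk. apply in_seq in Hk.
  unfold Xrep. destruct (Nat.eqb_spec k 0); [lia|reflexivity].
Qed.

Theorem main_l0 (g : Cplx) (L : nat) (mu x : nat -> Cplx) :
  (forall j k : nat, (j <= L)%nat -> (k <= L)%nat -> j <> k ->
     wb (Csub (x j) (x k)) <> C0) ->
  Csum (S L) (fun i => Cmul (sigma_coef L g mu x 0 i) (Zdw L g mu (Xrep x i))) = C0.
Proof.
  intros Hx.
  set (ys := map x (seq 1 L)).
  assert (HG : Gd (x O :: ys)).
  { change (x O :: ys) with (map x (0%nat :: seq 1 L)).
    apply (Gd_map x (fun k => (k <= L)%nat)).
    - intros; apply Hx; auto.
    - constructor. { intro H; apply in_seq in H; lia. } apply seq_NoDup.
    - intros k Hk. destruct Hk as [Hk|Hk]; [lia|]. apply in_seq in Hk; lia. }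
  pose proof (Aform g L mu ys (x O) HG (repeat true L)) as E.
  rewrite Abar in E. cbv iota in E.
  rewrite Csum_first.
  rewrite Zdw_Xrep0.
  assert (EZ : Bl g L mu ys (vac L) (repeat true L) = Zdw L g mu x) by (rewrite Zdw_Bl; reflexivity).
  rewrite EZ in E.
  assert (ES : Csum L (fun i => Cmul (sigma_coef L g mu x 0 (S i)) (Zdw L g mu (Xrep x (S i)))) =
               Copp (Csum (length ys) (fun i => Cmul (Mc g L mu (x O) ys i)
                  (Bl g L mu (replace_at ys i (x O)) (vac L) (repeat true L))))).
  { unfold ys. rewrite length_map, length_seq.
    transitivity (Cmul (Copp Defs.C1) (Csum L (fun i => Cmul (Mc g L mu (x O) (map x (seq 1 L)) i)
                  (Bl g L mu (replace_at (map x (seq 1 L)) i (x O)) (vac L) (repeat true L))))).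
    2: { ring. }
    rewrite <- Csum_scale. apply Csum_ext. intros i Hi.
    rewrite replace_map by auto. rewrite <- Zdw_Bl. simpl (1 + i)%nat.
    unfold sigma_coef, Mc. simpl Nat.eqb. rewrite nth_map_seq by auto.
    rewrite Lam_Cprod, Cprod_range_1, Cprod_range_0, Cprod_first, Lprod_remove.
    simpl Nat.eqb. simpl orb.
    rewrite (Cprod_ext L (fun i0 => if (i0 =? i)%nat || false then Defs.C1 else ab g x (S i0) (S i))
                         (fun j => if Nat.eqb j i then Defs.C1 else fr g (x (1 + j)%nat) (x (S i)))).
    - unfold hr. cbv iota. ring.
    - intros j _. rewrite orb_false_r. destruct (Nat.eqb j i); reflexivity. }
  rewrite ES.
  unfold sigma_coef at 1. simpl Nat.eqb.
  rewrite Cprod_range_1, Cprod_range_1, Cprod_range_0, Cprod_first.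
  simpl Nat.eqb.
  rewrite <- Lbar_Cprod, <- Lam_Cprod.
  assert (EP : Cprod L (fun i => ab g x (S i) 0) = Lprod ys (fun w => fr g w (x O))).
  { unfold ys. rewrite Lprod_map. reflexivity. }
  rewrite EP. unfold C0c in E.
  match type of E with ?P = ?Q => transitivity (Csub P Q) end.
  - ring.
  - rewrite E. ring.
Qed.

Definition sw (l i : nat) : nat := if Nat.eqb i 0 then l else if Nat.eqb i l then 0%nat else i.

Lemma Csum_extract n F a : (a < n)%nat ->
  Csum n F = Cadd (F a) (Csum n (fun i => if Nat.eqb i a then C0 else F i)).
Proof.
  induction n; intros Ha; [lia|]. simpl.
  destruct (Nat.eq_dec a n).
  - subst. rewrite Nat.eqb_refl.
    rewrite (Csum_ext n (fun i => if Nat.eqb i n then C0 else F i) F). { ring. }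
    intros i Hi. destruct (Nat.eqb_spec i n); [lia|reflexivity].
  - rewrite IHn by lia. destruct (Nat.eqb_spec n a); [lia|]. ring.
Qed.

Lemma Cprod_extract n F a : (a < n)%nat ->
  Cprod n F = Cmul (F a) (Cprod n (fun i => if Nat.eqb i a then Defs.C1 else F i)).
Proof.
  induction n; intros Ha; [lia|]. simpl.
  destruct (Nat.eq_dec a n).
  - subst. rewrite Nat.eqb_refl.
    rewrite (Cprod_ext n (fun i => if Nat.eqb i n then Defs.C1 else F i) F). { ring. }
    intros i Hi. destruct (Nat.eqb_spec i n); [lia|reflexivity].
  - rewrite IHn by lia. destruct (Nat.eqb_spec n a); [lia|]. ring.
Qed.

Lemma Csum_swap L F l : (1 <= l <= L)%nat ->
  Csum (S L) F = Csum (S L) (fun i => F (sw l i)).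
Proof.
  intros Hl.
  rewrite (Csum_extract _ F 0) by lia.
  rewrite (Csum_extract _ (fun i => if Nat.eqb i 0 then C0 else F i) l) by lia.
  rewrite (Csum_extract _ (fun i => F (sw l i)) 0) by lia.
  rewrite (Csum_extract _ (fun i => if Nat.eqb i 0 then C0 else F (sw l i)) l) by lia.
  unfold sw at 1 2. simpl Nat.eqb. destruct (Nat.eqb_spec l 0); [lia|].
  rewrite Nat.eqb_refl.
  rewrite (Csum_ext (S L) (fun i => if Nat.eqb i l then C0 else if Nat.eqb i 0 then C0 else F (sw l i))
     (fun i => if Nat.eqb i l then C0 else if Nat.eqb i 0 then C0 else F i)).
  { ring. }
  intros i _. unfold sw. destruct (Nat.eqb_spec i l), (Nat.eqb_spec i 0); auto.
Qed.

Lemma Cprod_swap L F l : (1 <= l <= L)%nat ->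
  Cprod (S L) F = Cprod (S L) (fun i => F (sw l i)).
Proof.
  intros Hl.
  rewrite (Cprod_extract _ F 0) by lia.
  rewrite (Cprod_extract _ (fun i => if Nat.eqb i 0 then Defs.C1 else F i) l) by lia.
  rewrite (Cprod_extract _ (fun i => F (sw l i)) 0) by lia.
  rewrite (Cprod_extract _ (fun i => if Nat.eqb i 0 then Defs.C1 else F (sw l i)) l) by lia.
  unfold sw at 1 2. simpl Nat.eqb. destruct (Nat.eqb_spec l 0); [lia|].
  rewrite Nat.eqb_refl.
  rewrite (Cprod_ext (S L) (fun i => if Nat.eqb i l then Defs.C1 else if Nat.eqb i 0 then Defs.C1 else F (sw l i))
     (fun i => if Nat.eqb i l then Defs.C1 else if Nat.eqb i 0 then Defs.C1 else F i)).
  { ring. }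
  intros i _. unfold sw. destruct (Nat.eqb_spec i l), (Nat.eqb_spec i 0); auto.
Qed.

Lemma Zdw_ext L g mu y y' : (forall k, (1 <= k <= L)%nat -> y k = y' k) ->
  Zdw L g mu y = Zdw L g mu y'.
Proof.
  intros H. rewrite !Zdw_Bl. replace (map y' (seq 1 L)) with (map y (seq 1 L)); [reflexivity|].
  apply map_ext_in. intros k Hk. apply in_seq in Hk. apply H. lia.
Qed.

Definition swp (a b k : nat) : nat := if Nat.eqb k a then b else if Nat.eqb k b then a else k.

Lemma Zsym L g mu y a b : (1 <= a <= L)%nat -> (1 <= b <= L)%nat ->
  Zdw L g mu (fun k => y (swp a b k)) = Zdw L g mu y.
Proof.
  intros Ha Hb. rewrite !Zdw_Bl.
  rewrite (Bl_perm g L mu (map (fun k => y (swp a b k)) (seq 1 L)) (map y (seq 1 L))); [reflexivity|].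
  rewrite <- (map_map (swp a b) y). apply Permutation_map.
  apply NoDup_Permutation.
  - apply Injective_map_NoDup; [|apply seq_NoDup].
    intros i j E. unfold swp in E.
    destruct (Nat.eqb_spec i a), (Nat.eqb_spec i b), (Nat.eqb_spec j a), (Nat.eqb_spec j b); lia.
  - apply seq_NoDup.
  - intros k. rewrite in_map_iff, in_seq. split.
    + intros [j [Ej Hj]]. apply in_seq in Hj. unfold swp in Ej.
      destruct (Nat.eqb_spec j a), (Nat.eqb_spec j b); lia.
    + intros Hk. exists (swp a b k). split.
      * unfold swp. destruct (Nat.eqb_spec k a), (Nat.eqb_spec k b); subst;
        rewrite ?Nat.eqb_refl; auto;
        try (destruct (Nat.eqb_spec b a); subst; auto; rewrite Nat.eqb_refl; auto).
        destruct (Nat.eqb_spec k a); [lia|]. destruct (Nat.eqb_spec k b); [lia|]. auto.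
      * apply in_seq. unfold swp. destruct (Nat.eqb_spec k a), (Nat.eqb_spec k b); lia.
Qed.

Lemma Cprod_range_0_split L F : Cprod_range 0 L F = Cmul (F O) (Cprod_range 1 L F).
Proof. rewrite Cprod_range_0, Cprod_first, Cprod_range_1. reflexivity. Qed.

Lemma Cprod_range_ext m n F G : (forall k, (m <= k <= n)%nat -> F k = G k) ->
  Cprod_range m n F = Cprod_range m n G.
Proof.
  intros H. unfold Cprod_range. apply Cprod_ext. intros i Hi. apply H. lia.
Qed.

Ltac fin x'0 x'l x'k :=
  repeat match goal with |- context [Nat.eqb ?a ?b] =>
    first [is_var a | constr_eq a O]; first [is_var b | constr_eq b O];
    destruct (Nat.eqb_spec a b); try lia end;
  subst; simpl; rewrite ?x'0, ?x'l; try (rewrite !x'k by lia); try reflexivity.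

Theorem corollary6p1 (g : Cplx) (L : nat) (mu x : nat -> Cplx) :
  (1 <= L)%nat ->
  (forall j k : nat, (j <= L)%nat -> (k <= L)%nat -> j <> k ->
     wb (Csub (x j) (x k)) <> C0) ->
  forall l : nat, (l <= L)%nat ->
    Csum (S L) (fun i => Cmul (sigma_coef L g mu x l i) (Zdw L g mu (Xrep x i))) = C0.
Proof.
  intros HL Hx l Hl.
  destruct (Nat.eq_dec l 0) as [->|Hl0]. { apply main_l0; auto. }
  set (x' := fun k => x (sw l k)).
  assert (Hx' : forall j k : nat, (j <= L)%nat -> (k <= L)%nat -> j <> k ->
     wb (Csub (x' j) (x' k)) <> C0).
  { intros j k Hj Hk Hjk. unfold x'. apply Hx; unfold sw;
    destruct (Nat.eqb_spec j 0), (Nat.eqb_spec j l), (Nat.eqb_spec k 0), (Nat.eqb_spec k l); lia. }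
  pose proof (main_l0 g L mu x' Hx') as H0.
  rewrite (Csum_swap L _ l) by lia.
  rewrite <- H0. apply Csum_ext. intros i Hi.
  assert (x'0 : x' O = x l) by reflexivity.
  assert (x'l : x' l = x O) by (unfold x', sw; rewrite Nat.eqb_refl; destruct (Nat.eqb_spec l 0); [lia|reflexivity]).
  assert (x'k : forall k, k <> O -> k <> l -> x' k = x k).
  { intros k H1 H2. unfold x', sw. destruct (Nat.eqb_spec k 0), (Nat.eqb_spec k l); auto; lia. }
  clearbody x'.
  destruct (Nat.eq_dec i 0) as [->|Hi0]; [|destruct (Nat.eq_dec i l) as [->|Hil]].
  -
    replace (sw l 0) with l by reflexivity.
    f_equal.
    + unfold sigma_coef. rewrite !Nat.eqb_refl. rewrite x'0.
      f_equal. f_equal.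
      rewrite !Cprod_range_0.
      rewrite (Cprod_swap L _ l) by lia. apply Cprod_ext. intros k Hk.
      unfold sw, ab. fin x'0 x'l x'k.
    + apply Zdw_ext. intros k Hk. unfold Xrep. fin x'0 x'l x'k.
  -
    replace (sw l l) with O by (unfold sw; fin x'0 x'l x'k).
    f_equal.
    + unfold sigma_coef. fin x'0 x'l x'k. f_equal. f_equal.
      rewrite Cprod_range_0_split. simpl.
      transitivity (Cprod_range 1 L (fun k => if (k =? l)%nat || (k =? 0)%nat then Defs.C1 else ab g x' k l)).
      2: { rewrite orb_true_r. ring. }
      apply Cprod_range_ext. intros k Hk. unfold ab. fin x'0 x'l x'k.
    + apply Zdw_ext. intros k Hk. unfold Xrep. fin x'0 x'l x'k.
  -
    replace (sw l i) with i by (unfold sw; fin x'0 x'l x'k).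
    f_equal.
    + unfold sigma_coef. fin x'0 x'l x'k.
      f_equal. f_equal.
      rewrite !Cprod_range_0. rewrite (Cprod_swap L _ l) by lia. apply Cprod_ext. intros k Hk.
      unfold sw, ab. fin x'0 x'l x'k.
    + rewrite <- (Zsym L g mu (Xrep x i) i l) by lia.
      apply Zdw_ext. intros k Hk. unfold Xrep, swp. fin x'0 x'l x'k.
Qed.
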